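(* Let $(M,g,J)$ be an $RK$-manifold of real dimension $2n\ge 4$ which is of pointwise constant antiholomorphic sectional curvature $\nu$ (so $\nu$ is a function on $M$). Then at every point $p\in M$ the curvature tensor $R$ has the form $$R=\frac16\psi+\nu R_1-\frac{2n-1}{3}\,\nu R_2,$$ and moreover $$3S'-(n+1)S=\frac{1}{2n}\bigl(3\tau'-(n+1)\tau\bigr)g,\qquad \nu=\frac{(2n+1)\tau-3\tau'}{8n(n^2-1)}.$$
   Context: $(M,g,J)$ is an almost Hermitian manifold with metric $g$, almost complex structure $J$, and curvature tensor $R$ of type $(0,4)$, with sign convention such that the sectional curvature of a 2-plane $\alpha\subset T_pM$ with orthonormal basis $\{x,y\}$ is $K(\alpha,p)=R(x,y,y,x)$. A 2-plane $\alpha$ is antiholomorphic if $J\alpha\perp\alpha$. $M$ has pointwise constant antiholomorphic sectional curvature $\nu$ if for every $p\in M$, $K(\alpha,p)=\nu(p)$ for all antiholomorphic 2-planes $\alpha\subset T_pM$. $M$ is an $RK$-manifold if $R(x,y,z,u)=R(Jx,Jy,Jz,Ju)$ for all $x,y,z,u\in T_pM$, $p\in M$. Define $R'(x,y,z,u)=R(x,y,Jz,Ju)$. For an orthonormal basis $\{E_1,\dots,E_{2n}\}$ of $T_pM$, the Ricci tensor is $S(y,z)=\sum_i R(E_i,y,z,E_i)$ and the scalar curvature $\tau=\sum_i S(E_i,E_i)$; similarly $S'(y,z)=\sum_i R'(E_i,y,z,E_i)$ and $\tau'=\sum_i S'(E_i,E_i)$. The tensors $R_1,R_2,\psi$ are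 $R_1(x,y,z,u)=g(y,z)g(x,u)-g(x,z)g(y,u)$; $R_2(x,y,z,u)=g(Jy,z)g(Jx,u)-g(Jx,z)g(Jy,u)-2g(Jx,y)g(Jz,u)$; $\psi(x,y,z,u)=g(Jy,z)S(Jx,u)-g(Jx,z)S(Jy,u)-2g(Jx,y)S(Jz,u)+g(Jx,u)S(Jy,z)-g(Jy,u)S(Jx,z)-2g(Jz,u)S(Jx,y)$. *)

(* Defs.v *)
(* Pointwise (tangent-space) formalization of the curvature
   algebra of an almost Hermitian manifold at a point p. *)
From HB Require Import structures.
From mathcomp Require Import all_boot all_order all_algebra.
Set Implicit Arguments. Unset Strict Implicit. Unset Printing Implicit Defensive.
Import Order.TTheory GRing.Theory Num.Theory.
Local Open Scope ring_scope.

Section TangentAlgebra.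
Variables (R : realFieldType) (m : nat).
Notation V := 'rV[R]_m.

Definition gform (G : 'M[R]_m) (x y : V) : R := (x *m G *m y^T) 0 0.

Definition Jact (J : 'M[R]_m) (x : V) : V := x *m J.

Definition tensor4 := V -> V -> V -> V -> R.

Definition multilinear4 (T : tensor4) : Prop :=
  [/\ forall a x x' y z u, T (a *: x + x') y z u = a * T x y z u + T x' y z u,
      forall a x y y' z u, T x (a *: y + y') z u = a * T x y z u + T x y' z u,
      forall a x y z z' u, T x y (a *: z + z') u = a * T x y z u + T x y z' u &
      forall a x y z u u', T x y z (a *: u + u') = a * T x y z u + T x y z u'].

Definition curvature_tensor (T : tensor4) : Prop :=
  [/\ multilinear4 T,
      forall x y z u, T x y z u = - T y x z u,
      forall x y z u, T x y z u = - T x y u z &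
      forall x y z u, T x y z u + T y z x u + T z x y u = 0].

Definition RK (T : tensor4) (J : 'M[R]_m) : Prop :=
  forall x y z u, T x y z u = T (Jact J x) (Jact J y) (Jact J z) (Jact J u).

(* {x,y} orthonormal basis of an antiholomorphic 2-plane alpha (J alpha _|_ alpha) *)
Definition antihol_onb (G J : 'M[R]_m) (x y : V) : Prop :=
  [/\ gform G x x = 1, gform G y y = 1, gform G x y = 0 &
      [/\ gform G (Jact J x) x = 0, gform G (Jact J x) y = 0,
          gform G (Jact J y) x = 0 & gform G (Jact J y) y = 0]].

(* K(alpha) = T(x,y,y,x) = nu for every antiholomorphic plane alpha *)
Definition const_antihol (T : tensor4) (G J : 'M[R]_m) (nu : R) : Prop :=
  forall x y, antihol_onb G J x y -> T x y y x = nu.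

Definition orthonormal_basis (G : 'M[R]_m) (E : 'I_m -> V) : Prop :=
  forall i j, gform G (E i) (E j) = (i == j)%:R.

Definition Rprime (T : tensor4) (J : 'M[R]_m) : tensor4 :=
  fun x y z u => T x y (Jact J z) (Jact J u).

Definition Ricci (T : tensor4) (E : 'I_m -> V) (y z : V) : R :=
  \sum_i T (E i) y z (E i).

Definition scalar_curv (S : V -> V -> R) (E : 'I_m -> V) : R :=
  \sum_i S (E i) (E i).

Definition R1 (G : 'M[R]_m) : tensor4 := fun x y z u =>
  gform G y z * gform G x u - gform G x z * gform G y u.

Definition R2 (G J : 'M[R]_m) : tensor4 := fun x y z u =>
  gform G (Jact J y) z * gform G (Jact J x) u
  - gform G (Jact J x) z * gform G (Jact J y) u
  - 2 * gform G (Jact J x) y * gform G (Jact J z) u.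

Definition psi (G J : 'M[R]_m) (S : V -> V -> R) : tensor4 := fun x y z u =>
  gform G (Jact J y) z * S (Jact J x) u
  - gform G (Jact J x) z * S (Jact J y) u
  - 2 * gform G (Jact J x) y * S (Jact J z) u
  + gform G (Jact J x) u * S (Jact J y) z
  - gform G (Jact J y) u * S (Jact J x) z
  - 2 * gform G (Jact J z) u * S (Jact J x) y.

End TangentAlgebra.

(* Main.v *)
Require Import Defs.
From HB Require Import structures.
From mathcomp Require Import all_boot all_order all_algebra.
From mathcomp Require Import ring lra.
Set Implicit Arguments. Unset Strict Implicit. Unset Printing Implicit Defensive.
Import Order.TTheory GRing.Theory Num.Theory.
Local Open Scope ring_scope.

Section Basic.
Variables (R : realFieldType) (m : nat) (G J : 'M[R]_m).
Hypothesis GT : G^T = G.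
Notation V := 'rV[R]_m.
Local Notation g := (gform G).
Local Notation j := (Jact J).

Lemma gDl a (x y z : V) : g (a *: x + y) z = a * g x z + g y z.
Proof. by rewrite /gform !mulmxDl -!scalemxAl !mxE. Qed.

Lemma gC (x y : V) : g x y = g y x.
Proof.
rewrite /gform -[in LHS](trmxK (x *m G *m y^T)) mxE.
by rewrite !trmx_mul trmxK GT mulmxA.
Qed.

Lemma gDr a (x y z : V) : g z (a *: x + y) = a * g z x + g z y.
Proof. by rewrite gC gDl !(gC z). Qed.

Definition lin (f : V -> R) := forall a x y, f (a *: x + y) = a * f x + f y.

Lemma lin0 f : lin f -> f 0 = 0.
Proof. move=> h; have := h 1 0 0; rewrite scaler0 addr0 mul1r => e.
by apply: (addrI (f 0)); rewrite addr0 -e. Qed.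
Lemma linD f : lin f -> forall x y, f (x + y) = f x + f y.
Proof. by move=> h x y; rewrite -{1}[x]scale1r h mul1r. Qed.
Lemma linZ f : lin f -> forall a x, f (a *: x) = a * f x.
Proof. by move=> h a x; rewrite -[a *: x]addr0 h (lin0 h) addr0. Qed.
Lemma linN f : lin f -> forall x, f (- x) = - f x.
Proof. by move=> h x; rewrite -scaleN1r (linZ h) mulN1r. Qed.
Lemma linB f : lin f -> forall x y, f (x - y) = f x - f y.
Proof. by move=> h x y; rewrite (linD h) (linN h). Qed.
Lemma lin_sum f (I : finType) (a : I -> R) (v : I -> V) : lin f ->
  f (\sum_i a i *: v i) = \sum_i a i * f (v i).
Proof.
move=> h; rewrite (big_morph f (linD h) (lin0 h)).
by apply: eq_bigr => i _; rewrite (linZ h).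
Qed.

Lemma lin_gl z : lin (fun x => g x z).
Proof. by move=> a x y; rewrite gDl. Qed.
Lemma lin_gr z : lin (fun x => g z x).
Proof. by move=> a x y; rewrite gDr. Qed.

Lemma jD a (x y : V) : j (a *: x + y) = a *: j x + j y.
Proof. by rewrite /Jact mulmxDl scalemxAl. Qed.
Lemma lin_comp_j f : lin f -> lin (fun x => f (j x)).
Proof. by move=> h a x y; rewrite jD h. Qed.
Lemma j0 : j 0 = 0. Proof. by rewrite /Jact mul0mx. Qed.
Lemma jZ a x : j (a *: x) = a *: j x. Proof. by rewrite /Jact scalemxAl. Qed.
Lemma jN x : j (- x) = - j x. Proof. by rewrite /Jact mulNmx. Qed.
Lemma jDD x y : j (x + y) = j x + j y. Proof. by rewrite /Jact mulmxDl. Qed.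

Hypothesis JJ : J *m J = - 1%:M.
Lemma jj x : j (j x) = - x.
Proof. by rewrite /Jact -mulmxA JJ mulmxN mulmx1. Qed.

Hypothesis Jiso : forall x y, g (j x) (j y) = g x y.
Lemma gjl x y : g (j x) y = - g x (j y).
Proof. by rewrite -Jiso jj (linN (lin_gl _)). Qed.

Variable E : 'I_m -> V.
Hypothesis ONB : orthonormal_basis G E.
Let M : 'M[R]_m := \matrix_i E i.
Let rowM i : row i M = E i.
Proof. by rewrite rowK. Qed.
Let entry (A : 'M[R]_(1, m)) (B : 'M[R]_m) k : (A *m B^T) 0 k = (A *m (row k B)^T) 0 0.
Proof. by rewrite !mxE; apply: eq_bigr => l _; rewrite !mxE. Qed.
Let MGM : M *m (G *m M^T) = 1%:M.
Proof.
apply/matrixP => i k; rewrite mulmxA.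
have -> : (M *m G *m M^T) i k = (row i (M *m G *m M^T)) 0 k by rewrite [RHS]mxE.
rewrite !row_mul rowM entry rowM.
by have := ONB i k; rewrite /gform => ->; rewrite !mxE.
Qed.
Lemma parseval_vec v : v = \sum_i g v (E i) *: E i.
Proof.
have h := mulmx1C MGM.
rewrite -{1}[v]mulmx1 -h mulmxA mulmx_sum_row.
apply: eq_bigr => i _; rewrite rowM; congr (_ *: _).
by rewrite /gform mulmxA entry rowM.
Qed.
Lemma parseval f v : lin f -> \sum_i g v (E i) * f (E i) = f v.
Proof. by move=> h; rewrite {2}(parseval_vec v) (lin_sum _ _ h). Qed.
Lemma parseval' f v : lin f -> \sum_i g (E i) v * f (E i) = f v.
Proof. by move=> h; rewrite -(parseval v h); apply: eq_bigr => i _; rewrite gC. Qed.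
End Basic.

Section ML.
Variables (R : realFieldType) (m : nat).
Notation V := 'rV[R]_m.
Variable T : tensor4 R m.
Hypothesis hT : multilinear4 T.
Lemma lin1 y z u : lin (fun x => T x y z u).
Proof. by case: hT => h _ _ _ a x x'; rewrite h. Qed.
Lemma lin2 x z u : lin (fun y => T x y z u).
Proof. by case: hT => _ h _ _ a y y'; rewrite h. Qed.
Lemma lin3 x y u : lin (fun z => T x y z u).
Proof. by case: hT => _ _ h _ a z z'; rewrite h. Qed.
Lemma lin4 x y z : lin (fun u => T x y z u).
Proof. by case: hT => _ _ _ h a u u'; rewrite h. Qed.
Lemma mlD1 (x y z u v : V) : T (x + v) (y) (z) (u) = T (x) (y) (z) (u) + T (v) (y) (z) (u).
Proof. exact: (linD (lin1 _ _ _)). Qed.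
Lemma mlZ1 (a : R) (x y z u : V) : T (a *: x) (y) (z) (u) = a * T (x) (y) (z) (u).
Proof. exact: (linZ (lin1 _ _ _)). Qed.
Lemma mlN1 (x y z u : V) : T (- x) (y) (z) (u) = - T (x) (y) (z) (u).
Proof. exact: (linN (lin1 _ _ _)). Qed.
Lemma mlB1 (x y z u v : V) : T (x - v) (y) (z) (u) = T (x) (y) (z) (u) - T (v) (y) (z) (u).
Proof. exact: (linB (lin1 _ _ _)). Qed.
Lemma ml01 (x y z u : V) : T (0) (y) (z) (u) = 0.
Proof. exact: (lin0 (lin1 _ _ _)). Qed.
Lemma mlD2 (x y z u v : V) : T (x) (y + v) (z) (u) = T (x) (y) (z) (u) + T (x) (v) (z) (u).
Proof. exact: (linD (lin2 _ _ _)). Qed.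
Lemma mlZ2 (a : R) (x y z u : V) : T (x) (a *: y) (z) (u) = a * T (x) (y) (z) (u).
Proof. exact: (linZ (lin2 _ _ _)). Qed.
Lemma mlN2 (x y z u : V) : T (x) (- y) (z) (u) = - T (x) (y) (z) (u).
Proof. exact: (linN (lin2 _ _ _)). Qed.
Lemma mlB2 (x y z u v : V) : T (x) (y - v) (z) (u) = T (x) (y) (z) (u) - T (x) (v) (z) (u).
Proof. exact: (linB (lin2 _ _ _)). Qed.
Lemma ml02 (x y z u : V) : T (x) (0) (z) (u) = 0.
Proof. exact: (lin0 (lin2 _ _ _)). Qed.
Lemma mlD3 (x y z u v : V) : T (x) (y) (z + v) (u) = T (x) (y) (z) (u) + T (x) (y) (v) (u).
Proof. exact: (linD (lin3 _ _ _)). Qed.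
Lemma mlZ3 (a : R) (x y z u : V) : T (x) (y) (a *: z) (u) = a * T (x) (y) (z) (u).
Proof. exact: (linZ (lin3 _ _ _)). Qed.
Lemma mlN3 (x y z u : V) : T (x) (y) (- z) (u) = - T (x) (y) (z) (u).
Proof. exact: (linN (lin3 _ _ _)). Qed.
Lemma mlB3 (x y z u v : V) : T (x) (y) (z - v) (u) = T (x) (y) (z) (u) - T (x) (y) (v) (u).
Proof. exact: (linB (lin3 _ _ _)). Qed.
Lemma ml03 (x y z u : V) : T (x) (y) (0) (u) = 0.
Proof. exact: (lin0 (lin3 _ _ _)). Qed.
Lemma mlD4 (x y z u v : V) : T (x) (y) (z) (u + v) = T (x) (y) (z) (u) + T (x) (y) (z) (v).
Proof. exact: (linD (lin4 _ _ _)). Qed.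
Lemma mlZ4 (a : R) (x y z u : V) : T (x) (y) (z) (a *: u) = a * T (x) (y) (z) (u).
Proof. exact: (linZ (lin4 _ _ _)). Qed.
Lemma mlN4 (x y z u : V) : T (x) (y) (z) (- u) = - T (x) (y) (z) (u).
Proof. exact: (linN (lin4 _ _ _)). Qed.
Lemma mlB4 (x y z u v : V) : T (x) (y) (z) (u - v) = T (x) (y) (z) (u) - T (x) (y) (z) (v).
Proof. exact: (linB (lin4 _ _ _)). Qed.
Lemma ml04 (x y z u : V) : T (x) (y) (z) (0) = 0.
Proof. exact: (lin0 (lin4 _ _ _)). Qed.
End ML.

Section Curv.
Variables (R : realFieldType) (m : nat).
Notation V := 'rV[R]_m.
Variable T : tensor4 R m.
Hypothesis hT : curvature_tensor T.
Let A1 x y z u : T x y z u = - T y x z u. Proof. by case: hT. Qed.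
Let A2 x y z u : T x y z u = - T x y u z. Proof. by case: hT. Qed.
Let Bi x y z u : T x y z u + T y z x u + T z x y u = 0. Proof. by case: hT. Qed.
Let ML : multilinear4 T. Proof. by case: hT. Qed.
Lemma pairsym (x y z u : V) : T x y z u = T z u x y.
Proof.
have c0 : T x y z u = T x y z u by [].
have c1 : T y z x u = T y z x u by [].
have c2 : T z x y u = - T x z y u by rewrite (A1 z x y u) ?opprK.
have c3 : T y z u x = - T y z x u by rewrite (A2 y z u x) ?opprK.
have c4 : T z u y x = - T z u x y by rewrite (A2 z u y x) ?opprK.
have c5 : T u y z x = T y u x z by rewrite (A1 u y z x) (A2 y u z x) ?opprK.
have c6 : T z u x y = T z u x y by [].
have c7 : T u x z y = T x u y z by rewrite (A1 u x z y) (A2 x u z y) ?opprK.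
have c8 : T x z u y = - T x z y u by rewrite (A2 x z u y) ?opprK.
have c9 : T u x y z = - T x u y z by rewrite (A1 u x y z) ?opprK.
have c10 : T x y u z = - T x y z u by rewrite (A2 x y u z) ?opprK.
have c11 : T y u x z = T y u x z by [].
have b1 := Bi x y z u; have b2 := Bi y z u x; have b3 := Bi z u x y; have b4 := Bi u x y z.
lra.
Qed.
Lemma vanish_from_diag : (forall x y z : V, T x y z x = 0) -> forall x y z u, T x y z u = 0.
Proof.
move=> h x y z u.
have P : forall a b c d : V, T a b c d = - T d b c a.
  move=> a b c d; have := h (a + d) b c; rewrite mlD1 // !mlD4 // !h; lra.
have c0 : T y z x u = T x y z u by rewrite (A2 y z x u) (A1 y z u x) (P z y u x) (A2 x y u z) ?opprK.
have c1 : T z x y u = T x y z u by rewrite (A2 z x y u) (P z x u y) (A2 y x u z) (A1 y x z u) ?opprK.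
have b1 := Bi x y z u.
lra.
Qed.
End Curv.

Lemma poly5 (R : realFieldType) (c0 c1 c2 c3 c4 : R) (ts : seq R) :
  uniq ts -> size ts = 5%N ->
  (forall t, t \in ts -> c0 + c1 * t + c2 * t ^+ 2 + c3 * t ^+ 3 + c4 * t ^+ 4 = 0) ->
  c0 = 0 /\ c1 = 0.
Proof.
move=> u s h.
set p := Poly [:: c0; c1; c2; c3; c4].
have p0 : p = 0.
  apply/eqP; apply/negPn/negP => pn.
  have : all (root p) ts.
    apply/allP => t tin; rewrite /root horner_Poly /=; apply/eqP; rewrite -[RHS](h t tin); ring.
  move/(max_poly_roots pn)/(_ u); rewrite s.
  move=> b; have a := size_Poly [:: c0; c1; c2; c3; c4]; rewrite -/p /= in a.
  by rewrite ltnNge a in b.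
split.
  by have := coef_Poly [:: c0; c1; c2; c3; c4] 0; rewrite -/p p0 coef0.
by have := coef_Poly [:: c0; c1; c2; c3; c4] 1; rewrite -/p p0 coef0.
Qed.

Section Ext.
Variables (R : realFieldType) (m : nat).
Notation V := 'rV[R]_m.

Definition cf1 (W : tensor4 R m) (x e : V) :=
  W e x x x + W x e x x + W x x e x + W x x x e.
Definition cf2 (W : tensor4 R m) (x e : V) :=
  W e e x x + W e x e x + W e x x e + W x e e x + W x e x e + W x x e e.
Definition cf3 (W : tensor4 R m) (x e : V) :=
  W x e e e + W e x e e + W e e x e + W e e e x.

Lemma expand4 (W : tensor4 R m) (hW : multilinear4 W) (x e : V) (t : R) :
  W (x + t *: e) (x + t *: e) (x + t *: e) (x + t *: e) =
  W x x x x + cf1 W x e * t + cf2 W x e * t ^+ 2 + cf3 W x e * t ^+ 3 + W e e e e * t ^+ 4.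
Proof.
rewrite /cf1 /cf2 /cf3 !(mlD1 hW) !(mlD2 hW) !(mlD3 hW) !(mlD4 hW).
rewrite !(mlZ1 hW) !(mlZ2 hW) !(mlZ3 hW) !(mlZ4 hW); ring.
Qed.

Lemma hom4 (W : tensor4 R m) (hW : multilinear4 W) (s : R) (v : V) :
  W (s *: v) (s *: v) (s *: v) (s *: v) = s ^+ 4 * W v v v v.
Proof. rewrite (mlZ1 hW) (mlZ2 hW) (mlZ3 hW) (mlZ4 hW); ring. Qed.

Variable (G : 'M[R]_m).
Hypothesis GT : G^T = G.
Hypothesis Gpos : forall x : V, x != 0 -> 0 < gform G x x.
Local Notation g := (gform G).

Lemma g_ge0 x : 0 <= g x x.
Proof.
have [->|nz] := eqVneq x 0; last by apply: ltW; apply: Gpos.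
by rewrite /gform mul0mx mul0mx mxE.
Qed.

Lemma gAl (x y z : V) : g (x + y) z = g x z + g y z.
Proof. exact: (linD (lin_gl G z)). Qed.
Lemma gAr (x y z : V) : g z (x + y) = g z x + g z y.
Proof. exact: (linD (lin_gr GT z)). Qed.
Lemma gZl a (x z : V) : g (a *: x) z = a * g x z.
Proof. exact: (linZ (lin_gl G z)). Qed.
Lemma gZr a (x z : V) : g z (a *: x) = a * g z x.
Proof. exact: (linZ (lin_gr GT z)). Qed.
Lemma gNl (x z : V) : g (- x) z = - g x z.
Proof. exact: (linN (lin_gl G z)). Qed.
Lemma gNr (x z : V) : g z (- x) = - g z x.
Proof. exact: (linN (lin_gr GT z)). Qed.
Lemma gBl (x y z : V) : g (x - y) z = g x z - g y z.
Proof. exact: (linB (lin_gl G z)). Qed.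
Lemma gBr (x y z : V) : g z (x - y) = g z x - g z y.
Proof. exact: (linB (lin_gr GT z)). Qed.
Lemma g0l (z : V) : g 0 z = 0.
Proof. exact: (lin0 (lin_gl G z)). Qed.
Lemma g0r (z : V) : g z 0 = 0.
Proof. exact: (lin0 (lin_gr GT z)). Qed.

Lemma gnorm (x e : V) (t : R) :
  g (x + t *: e) (x + t *: e) = g x x + 2 * t * g x e + t ^+ 2 * g e e.
Proof. rewrite !gAl !gAr !gZl !gZr (gC GT e x); ring. Qed.

Lemma ext4 (W : tensor4 R m) (hW : multilinear4 W) :
  (forall v, g v v = 1 -> W v v v v = 0) ->
  forall x e, g e e = 1 -> W x x x x = 0 /\ cf1 W x e = 0.
Proof.
move=> hv x e he.
pose al := g x e. pose d := g x x - al ^+ 2.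
have hd : 0 <= d.
  have := g_ge0 (x + (- al) *: e); rewrite gnorm he.
  have -> : g x x + 2 * - al * g x e + (- al) ^+ 2 * 1 = d by rewrite /d /al; ring.
  done.
pose t (r : R) := (d / r - r) / 2 - al.
have key : forall r, 0 < r -> W (x + t r *: e) (x + t r *: e) (x + t r *: e) (x + t r *: e) = 0.
  move=> r r0; pose s := (d / r + r) / 2.
  have dr : 0 <= d / r by apply: divr_ge0 => //; apply: ltW.
  have s0 : 0 < s by rewrite /s; lra.
  have hn : g (x + t r *: e) (x + t r *: e) = s ^+ 2.
    rewrite gnorm he /t /s /d /al; field; exact: lt0r_neq0.
  have -> : x + t r *: e = s *: (s^-1 *: (x + t r *: e)).
    by rewrite scalerA mulfV ?scale1r // lt0r_neq0.
  rewrite hom4 // hv ?mulr0 //.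
  rewrite gZl gZr hn; field; exact: lt0r_neq0.
have allk : all (fun t0 => W x x x x + cf1 W x e * t0 + cf2 W x e * t0 ^+ 2 +
   cf3 W x e * t0 ^+ 3 + W e e e e * t0 ^+ 4 == 0) [:: t 1%:R; t 2%:R; t 3%:R; t 4%:R; t 5%:R].
  by rewrite /= -!expand4 // !key ?eqxx // ltr0n.
have n12 : t 1%:R != t 2%:R by rewrite /t; apply/eqP => hh; lra.
have n13 : t 1%:R != t 3%:R by rewrite /t; apply/eqP => hh; lra.
have n14 : t 1%:R != t 4%:R by rewrite /t; apply/eqP => hh; lra.
have n15 : t 1%:R != t 5%:R by rewrite /t; apply/eqP => hh; lra.
have n23 : t 2%:R != t 3%:R by rewrite /t; apply/eqP => hh; lra.
have n24 : t 2%:R != t 4%:R by rewrite /t; apply/eqP => hh; lra.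
have n25 : t 2%:R != t 5%:R by rewrite /t; apply/eqP => hh; lra.
have n34 : t 3%:R != t 4%:R by rewrite /t; apply/eqP => hh; lra.
have n35 : t 3%:R != t 5%:R by rewrite /t; apply/eqP => hh; lra.
have n45 : t 4%:R != t 5%:R by rewrite /t; apply/eqP => hh; lra.
have := poly5 (c2 := cf2 W x e) (c3 := cf3 W x e) (c4 := W e e e e) (ts := [:: t 1%:R; t 2%:R; t 3%:R; t 4%:R; t 5%:R]).
apply => //; last by move=> t0 /(allP allk)/eqP.
by rewrite /= !inE !negb_or n12 n13 n14 n15 n23 n24 n25 n34 n35 n45.
Qed.
End Ext.

Section Refl.
Variables (R : realFieldType) (m : nat) (G J : 'M[R]_m) (E : 'I_m -> 'rV[R]_m).
Notation V := 'rV[R]_m.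
Hypothesis GT : G^T = G.
Hypothesis Gpos : forall x : V, x != 0 -> 0 < gform G x x.
Hypothesis JJ : J *m J = - 1%:M.
Hypothesis Jiso : forall x y, gform G (Jact J x) (Jact J y) = gform G x y.
Hypothesis ONB : orthonormal_basis G E.
Hypothesis hm : (3 <= m)%N.
Local Notation g := (gform G).
Local Notation j := (Jact J).

Lemma gjxx x : g (j x) x = 0.
Proof.
have h := gjl JJ Jiso x x; rewrite (gC GT x) in h.
lra.
Qed.

Definition refl (w v : V) := v - (2 * g v w / g w w) *: w.

Lemma refl_iso w a b : g (refl w a) (refl w b) = g a b.
Proof.
rewrite /refl !(gBl G, gBr GT) !(gZl G, gZr GT) (gC GT w b).
have [->|nz] := eqVneq (g w w) 0; first by rewrite invr0 !mulr0 !mul0r !subr0.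
by field.
Qed.

Lemma refl_fix w v : g v w = 0 -> refl w v = v.
Proof. by move=> h; rewrite /refl h mulr0 mul0r scale0r subr0. Qed.

Lemma refl_swap a b : g a a = g b b -> refl (a - b) a = b.
Proof.
move=> h; have [->|nz] := eqVneq a b; first by rewrite subrr /refl scaler0 subr0.
have gp : 0 < g (a - b) (a - b) by apply: Gpos; rewrite subr_eq0.
have e1 : g (a - b) (a - b) = 2 * (g a a - g a b).
  by rewrite !(gBl G, gBr GT) (gC GT b a) h; ring.
have e2 : 2 * g a (a - b) / g (a - b) (a - b) = 1.
  rewrite e1 gBr // ; field; move: gp; rewrite e1 => gp; apply/eqP => h0.
  by move: gp; rewrite h0 mulr0 ltxx.
by rewrite /refl e2 scale1r opprB addrC subrK.
Qed.

Lemma unit_perp x : g x x = 1 -> exists e, [/\ g e e = 1, g e x = 0 & g e (j x) = 0].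
Proof.
move=> hx.
have h0 : (0 < m)%N by apply: leq_trans hm.
have h1 : (1 < m)%N by apply: leq_trans hm.
have h2 : (2 < m)%N by [].
pose k0 : 'I_m := Ordinal h0. pose k1 : 'I_m := Ordinal h1. pose k2 : 'I_m := Ordinal h2.
pose s1 := refl (E k0 - x).
have s1x : s1 (E k0) = x by rewrite /s1 refl_swap // ONB eqxx hx.
pose a := s1 (E k1). pose b := s1 (E k2).
have gab : g a b = 0 by rewrite /a /b refl_iso ONB.
have gaa : g a a = 1 by rewrite /a refl_iso ONB eqxx.
have gbb : g b b = 1 by rewrite /b refl_iso ONB eqxx.
have gax : g a x = 0 by rewrite /a -s1x refl_iso ONB.
have gbx : g b x = 0 by rewrite /b -s1x refl_iso ONB.
pose s2 := refl (a - j x).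
have s2a : s2 a = j x by rewrite /s2 refl_swap // Jiso gaa hx.
have s2x : s2 x = x.
  by rewrite /s2 refl_fix // gBr // (gC GT x a) gax (gC GT x) gjxx subr0.
exists (s2 b); split.
- by rewrite refl_iso.
- by rewrite -{1}s2x refl_iso.
- by rewrite -s2a refl_iso (gC GT b a).
Qed.
End Refl.

Section Main.
Variables (R : realFieldType) (m : nat) (G J : 'M[R]_m) (E : 'I_m -> 'rV[R]_m).
Notation V := 'rV[R]_m.
Hypothesis GT : G^T = G.
Hypothesis Gpos : forall x : V, x != 0 -> 0 < gform G x x.
Hypothesis JJ : J *m J = - 1%:M.
Hypothesis Jiso : forall x y, gform G (Jact J x) (Jact J y) = gform G x y.
Hypothesis ONB : orthonormal_basis G E.
Hypothesis hm : (3 <= m)%N.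
Local Notation g := (gform G).
Local Notation j := (Jact J).

Let gc x y : g x y = g y x. Proof. exact: gC. Qed.
Let gj x y : g (j x) y = - g x (j y). Proof. exact: gjl. Qed.
Let gjx x : g (j x) x = 0. Proof. exact: gjxx. Qed.
Let jjx x : j (j x) = - x. Proof. exact: jj. Qed.
Let pars f v : lin f -> \sum_i g v (E i) * f (E i) = f v.
Proof. exact: parseval. Qed.
Let pars' f v : lin f -> \sum_i g (E i) v * f (E i) = f v.
Proof. exact: parseval'. Qed.
Let ljl z : lin (fun x => g x z). Proof. exact: lin_gl. Qed.
Let ljr z : lin (fun x => g z x). Proof. exact: lin_gr. Qed.

Lemma sq_param (x e : V) (r : R) : g e e = 1 -> 0 < r ->
  exists2 s, 0 < s &
    g (x + ((((g x x - g x e ^+ 2) / r - r) / 2 - g x e) *: e))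
      (x + ((((g x x - g x e ^+ 2) / r - r) / 2 - g x e) *: e)) = s ^+ 2.
Proof.
move=> he r0.
pose al := g x e. pose d := g x x - al ^+ 2.
have hd : 0 <= d.
  have := g_ge0 Gpos (x + (- al) *: e); rewrite (gnorm GT) he.
  have -> : g x x + 2 * - al * g x e + (- al) ^+ 2 * 1 = d by rewrite /d /al; ring.
  done.
have dr : 0 <= d / r by apply: divr_ge0 => //; apply: ltW.
exists ((d / r + r) / 2); first lra.
rewrite (gnorm GT) he /d /al; field; exact: lt0r_neq0.
Qed.

Lemma dist_param (x e : V) : g e e = 1 ->
  ((g x x - g x e ^+ 2) / 1 - 1) / 2 - g x e != ((g x x - g x e ^+ 2) / 2%:R - 2%:R) / 2 - g x e.
Proof.
move=> he; pose al := g x e.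
have hd : 0 <= g x x - al ^+ 2.
  have := g_ge0 Gpos (x + (- al) *: e); rewrite (gnorm GT) he.
  by have -> : g x x + 2 * - al * g x e + (- al) ^+ 2 * 1 = g x x - al ^+ 2 by rewrite /al; ring.
rewrite -/al; apply/eqP => h; lra.
Qed.

Variable U : tensor4 R m.
Hypothesis hU : curvature_tensor U.
Hypothesis RKU : RK U J.
Hypothesis RicU : forall y z, \sum_i U (E i) y z (E i) = 0.
Hypothesis antiU : forall x y, antihol_onb G J x y -> U x y y x = 0.

Let mU : multilinear4 U. Proof. by case: hU. Qed.
Let A1 x y z u : U x y z u = - U y x z u. Proof. by case: hU. Qed.
Let A2 x y z u : U x y z u = - U x y u z. Proof. by case: hU. Qed.
Let PS x y z u : U x y z u = U z u x y. Proof. exact: pairsym. Qed.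
Let U00 x z u : U x x z u = 0.
Proof. by have := A1 x x z u; lra. Qed.
Let U33 x y z : U x y z z = 0.
Proof. by have := A2 x y z z; lra. Qed.

Lemma antiA x v : g x x = 1 -> g v v = 1 -> g x v = 0 -> g (j x) v = 0 -> U x v v x = 0.
Proof.
move=> hx hv hxv hjv; apply: antiU; split => //; split => //; try exact: gjx.
by rewrite gj gc hjv oppr0.
Qed.

Lemma A1Q x y : g x x = 1 -> g x y = 0 -> g (j x) y = 0 -> U x y y x = 0.
Proof.
move=> hx hxy hjy.
have [e [he hex hejx]] : exists e, [/\ g e e = 1, g e x = 0 & g e (j x) = 0].
  exact: (unit_perp GT Gpos JJ Jiso ONB hm).
have Qe : U x e e x = 0 by apply: antiA => //; rewrite gc.
pose F t := U x (y + t *: e) (y + t *: e) x.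
have expF : forall t, F t = U x y y x + t * (U x y e x + U x e y x) + t ^+ 2 * U x e e x.
  move=> t; rewrite /F !(mlD2 mU) !(mlD3 mU) !(mlZ2 mU) !(mlZ3 mU); ring.
pose tt r := ((g y y - g y e ^+ 2) / r - r) / 2 - g y e.
have Fz : forall r, 0 < r -> F (tt r) = 0.
  move=> r r0; have [s s0 hs] := sq_param y he r0.
  rewrite /F -/(tt r) in hs *.
  set v := y + tt r *: e in hs *.
  have sn : s != 0 by exact: lt0r_neq0.
  have -> : v = s *: (s^-1 *: v) by rewrite scalerA mulfV ?scale1r.
  rewrite (mlZ2 mU) (mlZ3 mU) antiA ?mulr0 //.
  - by rewrite (gZl G) (gZr GT) hs; field.
  - by rewrite (gZr GT) /v (gAr GT) (gZr GT) hxy gc hex; ring.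
  - by rewrite (gZr GT) /v (gAr GT) (gZr GT) hjy gc hejx; ring.
have h1 := Fz 1 ltr01. have h2 : F (tt 2) = 0 by apply: Fz; lra.
rewrite !expF Qe in h1 h2.
have d := dist_param y he; rewrite -/(tt 1) -/(tt 2) in d.
set c := U x y e x + U x e y x in h1 h2.
have hc : (tt 1 - tt 2) * c = 0 by rewrite mulrBl; lra.
move/eqP: hc; rewrite mulf_eq0 subr_eq0 (negbTE d) /= => /eqP c0.
by rewrite c0 in h1; lra.
Qed.
Let sw x y z : U x z y x = U x y z x.
Proof. by rewrite (PS x z y x) (A1 y x x z) (A2 x y x z) opprK. Qed.

Lemma H_Q x w : g x x = 1 -> g (j x) w = 0 -> U x w w x = 0.
Proof.
move=> hx hw; set c := g w x; set w' := w - c *: x.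
have q : U x w' w' x = 0.
  apply: A1Q => //.
  - by rewrite (gBr GT) (gZr GT) hx gc; rewrite /c; ring.
  - by rewrite (gBr GT) (gZr GT) hw gjx; ring.
rewrite -q /w' !(mlB2 mU) !(mlB3 mU) !(mlZ2 mU) !(mlZ3 mU) !U00 U33; ring.
Qed.

Lemma H_B x y z : g x x = 1 -> g (j x) y = 0 -> g (j x) z = 0 -> U x y z x = 0.
Proof.
move=> hx hy hz.
have q : U x (y + z) (y + z) x = 0 by apply: H_Q => //; rewrite (gAr GT) hy hz addr0.
rewrite (mlD2 mU) !(mlD3 mU) (sw x y z) (H_Q hx hy) (H_Q hx hz) in q; lra.
Qed.

Lemma star_unit x y z : g x x = 1 ->
  U x y z x = g (j x) y * U x (j x) z x + g (j x) z * U x (j x) y x.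
Proof.
move=> hx.
have hjj : g (j x) (j x) = 1 by rewrite Jiso.
have gen : forall y z, U x y z x = g (j x) y * U x (j x) z x + g (j x) z * U x (j x) y x
    - g (j x) y * g (j x) z * U x (j x) (j x) x.
  move=> y' z'.
  have q := H_B (y := y' - g (j x) y' *: j x) (z := z' - g (j x) z' *: j x) hx.
  rewrite !(gBr GT) !(gZr GT) hjj !mulr1 !subrr in q.
  have {}q := q erefl erefl.
  rewrite !(mlB2 mU) !(mlB3 mU) !(mlZ2 mU) !(mlZ3 mU) (sw x (j x) y') in q; lra.
have H0 : U x (j x) (j x) x = 0.
  have := RicU x x.
  rewrite (eq_bigr (fun i => 2 * (g (j x) (E i) * U x (j x) (E i) x)
       - g (j x) (E i) * g (j x) (E i) * U x (j x) (j x) x)); last first.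
    by move=> i _; rewrite PS gen; ring.
  rewrite sumrB -mulr_sumr -mulr_suml.
  rewrite (pars (j x) (lin3 mU x (j x) x)) (pars (j x) (ljr (j x))) hjj; lra.
by rewrite gen H0 mulr0 subr0.
Qed.
Definition Wt (y z : V) : tensor4 R m := fun p q r s =>
  g p q * U r y z s - g (j p) y * U q (j r) z s - g (j p) z * U q (j r) y s.

Lemma Wt_ml y z : multilinear4 (Wt y z).
Proof.
case: mU => m1 m2 m3 m4.
split => a p p' q r s; rewrite /Wt ?(gDl G) ?(gDr GT) ?jD ?(gDl G) ?m1 ?m2 ?m3 ?m4; ring.
Qed.

Lemma Wext y z : forall x e, g e e = 1 -> Wt y z x x x x = 0 /\ cf1 (Wt y z) x e = 0.
Proof. apply: (ext4 GT Gpos (Wt_ml y z)) => v hv; rewrite /Wt hv mul1r star_unit //; ring. Qed.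

Let k0 : 'I_m := Ordinal (ltnW (ltnW hm)).
Let hE i : g (E i) (E i) = 1. Proof. by rewrite ONB eqxx. Qed.

Lemma star_all x y z :
  g x x * U x y z x = g (j x) y * U x (j x) z x + g (j x) z * U x (j x) y x.
Proof. have [h _] := Wext y z x (hE k0); move: h; rewrite /Wt; lra. Qed.

Lemma step_ii x w : U (j x) x w (j x) = U x (j x) (j w) x.
Proof.
have [->|nx] := eqVneq x 0; first by rewrite j0 !(ml01 mU).
have N0 : 0 < g x x := Gpos nx.
pose ga w := U x (j x) (j w) x - U (j x) x w (j x).
have key : forall y z, g x y * ga z + g x z * ga y = 0.
  move=> y z; rewrite /ga.
  have s1 := star_all (j x) y z.
  have s2 := star_all x (j y) (j z).
  rewrite (RKU (j x) y z (j x)) !jjx !(mlN1 mU) !(mlN2 mU) !(mlN4 mU) opprK in s1.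
  rewrite Jiso !(gNl G) in s1.
  rewrite !Jiso in s2.
  lra.
have k1 := key x x.
have g1 : g x x * ga x = 0 by lra.
move/eqP: g1; rewrite mulf_eq0 (gt_eqF N0) /= => /eqP g1.
have k2 := key w x; rewrite g1 mulr0 add0r in k2.
move/eqP: k2; rewrite mulf_eq0 (gt_eqF N0) /= /ga subr_eq0 => /eqP ->; done.
Qed.
Lemma step_tr x z : x != 0 -> U x (j x) (j z) x = U x (j x) z (j x).
Proof.
move=> nx; have N0 : 0 < g x x := Gpos nx.
have sum0 : \sum_i cf1 (Wt (E i) z) x (E i) = 0.
  by apply: big1 => i _; case: (Wext (E i) z x (hE i)).
have T1 : \sum_i cf1 (Wt (E i) z) x (E i) = \sum_i (
    g (E i) x * U x (E i) z x + g x (E i) * U x (E i) z x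
  + g (E i) (j z) * U x (j x) (E i) x + - (g (j x) (E i) * U (E i) (j x) z x)
  + g (j x) z * U (E i) (j x) x (E i) + - (g (j x) (E i) * U x (j (E i)) z x)
  + - (g (j x) z * U x (j (E i)) (E i) x) + - (g x x * U (E i) x z (E i))
  + - (g (j x) (E i) * U x (j x) z (E i))).
  apply: eq_bigr => i _; rewrite /cf1 /Wt !gjx !U00 !U33 (gj (E i) z).
  rewrite (A2 (E i) (j x) (E i) x) (A1 x (E i) z (E i)); ring.
rewrite T1 !big_split !sumrN /= in sum0.
have v1 : \sum_i g (E i) x * U x (E i) z x = 0 by rewrite (pars' x (lin2 mU x z x)) U00.
have v2 : \sum_i g x (E i) * U x (E i) z x = 0 by rewrite (pars x (lin2 mU x z x)) U00.
have v3 : \sum_i g (E i) (j z) * U x (j x) (E i) x = U x (j x) (j z) x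
  by rewrite (pars' (j z) (lin3 mU x (j x) x)).
have v4 : \sum_i g (j x) (E i) * U (E i) (j x) z x = 0
  by rewrite (pars (j x) (lin1 mU (j x) z x)) U00.
have v5 : \sum_i g (j x) z * U (E i) (j x) x (E i) = 0 by rewrite -mulr_sumr RicU mulr0.
have v6 : \sum_i g (j x) (E i) * U x (j (E i)) z x = 0.
  by rewrite (pars (j x) (lin_comp_j J (lin2 mU x z x))) jjx (mlN2 mU) U00 oppr0.
have v8 : \sum_i g x x * U (E i) x z (E i) = 0 by rewrite -mulr_sumr RicU mulr0.
have v9 : \sum_i g (j x) (E i) * U x (j x) z (E i) = U x (j x) z (j x)
  by rewrite (pars (j x) (lin4 mU x (j x) z)).
have v7 : \sum_i g (j x) z * U x (j (E i)) (E i) x = 0.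
  rewrite -mulr_sumr.
  have : g x x * \sum_i U x (j (E i)) (E i) x = 0.
    rewrite mulr_sumr (eq_bigr (fun i => g x (E i) * U x (j x) (E i) x
        + g (j x) (E i) * U x (j x) (j (E i)) x)); last first.
      by move=> i _; rewrite star_all Jiso.
    rewrite big_split /= (pars x (lin3 mU x (j x) x))
      (pars (j x) (lin_comp_j J (lin3 mU x (j x) x))) jjx (mlN3 mU) U33; rewrite oppr0 addr0.
    done.
  by move/eqP; rewrite mulf_eq0 (gt_eqF N0) /= => /eqP ->; rewrite mulr0.
rewrite v1 v2 v3 v4 v5 v6 v7 v8 v9 in sum0; lra.
Qed.
Lemma beta0 x w : U x (j x) w x = 0.
Proof.
have [->|nx] := eqVneq x 0; first by rewrite !(ml01 mU).
have h : forall z, U x (j x) (j z) x = 0.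
  move=> z; have h1 := step_tr z nx; have h2 := step_ii x z.
  rewrite (A1 x (j x) z (j x)) in h1; lra.
have -> : w = j (- j w) by rewrite jN jjx opprK.
exact: h.
Qed.

Lemma main_vanish : forall a b c d, U a b c d = 0.
Proof.
apply: (vanish_from_diag hU) => x y z.
have [->|nx] := eqVneq x 0; first by rewrite !(ml01 mU).
have h := star_all x y z; rewrite !beta0 !mulr0 addr0 in h.
by move/eqP: h; rewrite mulf_eq0 (gt_eqF (Gpos nx)) /= => /eqP.
Qed.
End Main.

Section Psi.
Variables (R : realFieldType) (m : nat) (G J : 'M[R]_m) (E : 'I_m -> 'rV[R]_m).
Notation V := 'rV[R]_m.
Hypothesis GT : G^T = G.
Hypothesis JJ : J *m J = - 1%:M.
Hypothesis Jiso : forall x y, gform G (Jact J x) (Jact J y) = gform G x y.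
Hypothesis ONB : orthonormal_basis G E.
Local Notation g := (gform G).
Local Notation j := (Jact J).

Let gc x y : g x y = g y x. Proof. exact: gC. Qed.
Let gj x y : g (j x) y = - g x (j y). Proof. exact: gjl. Qed.
Let gjs x y : g (j x) y = - g (j y) x. Proof. by rewrite gj gc. Qed.
Let jjx x : j (j x) = - x. Proof. exact: jj. Qed.
Let pars f v : lin f -> \sum_i g v (E i) * f (E i) = f v.
Proof. exact: parseval. Qed.
Let pars' f v : lin f -> \sum_i g (E i) v * f (E i) = f v.
Proof. exact: parseval'. Qed.

Variable S : V -> V -> R.
Hypothesis SDl : forall a x y z, S (a *: x + y) z = a * S x z + S y z.
Hypothesis SDr : forall a x y z, S z (a *: x + y) = a * S z x + S z y.
Hypothesis Ssym : forall x y, S x y = S y x.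
Hypothesis SJ : forall x y, S (j x) (j y) = S x y.

Let lSl z : lin (fun x => S x z). Proof. by move=> a p q; exact: SDl. Qed.
Let lSr z : lin (fun x => S z x). Proof. by move=> a p q; exact: SDr. Qed.
Let Sjs x y : S (j x) y = - S (j y) x.
Proof. by rewrite -{1}SJ jjx (linN (lSl (j y))) Ssym. Qed.
Let Sjx x : S (j x) x = 0.
Proof. by have := Sjs x x; lra. Qed.
Let gjx x : g (j x) x = 0.
Proof. by have := gjs x x; lra. Qed.

Lemma psi_ml : multilinear4 (psi G J S).
Proof.
split => a p p' q r s; rewrite /psi ?jD ?(gDl G) ?(gDr GT) ?SDl ?SDr; ring.
Qed.

Lemma psi_ct : curvature_tensor (psi G J S).
Proof.
split; first exact: psi_ml.
- move=> x y z u; rewrite /psi (gjs y x) (Sjs y x); ring.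
- move=> x y z u; rewrite /psi (gjs u z) (Sjs u z); ring.
- move=> x y z u; rewrite /psi ?(gjs y x) ?(gjs z x) ?(gjs u x) ?(gjs z y) ?(gjs u y) ?(gjs u z)
    ?(Sjs y x) ?(Sjs z x) ?(Sjs u x) ?(Sjs z y) ?(Sjs u y) ?(Sjs u z); ring.
Qed.

Lemma psi_RK : RK (psi G J S) J.
Proof. by move=> x y z u; rewrite /psi !Jiso !SJ. Qed.

Lemma psi_anti x y : g (j x) y = 0 -> g (j y) x = 0 -> psi G J S x y y x = 0.
Proof. by move=> h1 h2; rewrite /psi h1 h2 !gjx; ring. Qed.
Lemma sum_gEE : \sum_i g (E i) (E i) = m%:R.
Proof.
rewrite (eq_bigr (fun _ => 1)) => [|i _]; last by rewrite ONB eqxx.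
by rewrite sumr_const card_ord.
Qed.

Lemma psi_tr y z : \sum_i psi G J S (E i) y z (E i) = 6 * S y z.
Proof.
rewrite (eq_bigr (fun i => g (E i) (j z) * S (j y) (E i) + 2 * (g (E i) (j y) * S (j z) (E i))
   + - (g (j y) (E i) * S (j (E i)) z) + - (2 * (g (j z) (E i) * S (j (E i)) y)))); last first.
  by move=> i _; rewrite /psi !Sjx !gjx (gj (E i) z) (gj (E i) y); ring.
rewrite !big_split !sumrN -!mulr_sumr /=.
rewrite (pars' (j z) (lSr (j y))) (pars' (j y) (lSr (j z))) SJ SJ.
rewrite (pars (j y) (lin_comp_j J (lSl z))) (pars (j z) (lin_comp_j J (lSl y))) !jjx.
rewrite (linN (lSl z)) (linN (lSl y)) (Ssym z y); ring.
Qed.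

Lemma psi_trp y z : \sum_i psi G J S (E i) y (j z) (j (E i)) =
  g y z * (\sum_i S (E i) (E i)) + (m%:R + 2) * S y z.
Proof.
rewrite (eq_bigr (fun i => g y z * S (E i) (E i) + - (g (E i) z * S y (E i))
   + 2 * (g (E i) (j y) * S (j z) (E i)) + S y z * g (E i) (E i)
   + - (g y (E i) * S (E i) z) + - (2 * (g (j z) (E i) * S (j (E i)) y)))); last first.
  move=> i _; rewrite /psi !Jiso !SJ (gj (E i) y) -(SJ (j z) (E i)) SJ; ring.
rewrite !big_split !sumrN -!mulr_sumr /= sum_gEE.
rewrite (pars' z (lSr y)) (pars' (j y) (lSr (j z))) SJ.
rewrite (pars y (lSl z)) (pars (j z) (lin_comp_j J (lSl y))) !jjx.
rewrite (linN (lSl y)) (Ssym z y); ring.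
Qed.
End Psi.

Lemma ct_comb (R : realFieldType) (m : nat) (A B C D : tensor4 R m) (ka kb kc : R) :
  curvature_tensor A -> curvature_tensor B -> curvature_tensor C -> curvature_tensor D ->
  curvature_tensor (fun x y z u => A x y z u - (ka * B x y z u + kb * C x y z u - kc * D x y z u)).
Proof.
case=> [[a1 a2 a3 a4] as1 as2 ab]; case=> [[b1 b2 b3 b4] bs1 bs2 bb].
case=> [[c1 c2 c3 c4] cs1 cs2 cb]; case=> [[d1 d2 d3 d4] ds1 ds2 db].
split; first split.
- by move=> *; rewrite a1 b1 c1 d1; ring.
- by move=> *; rewrite a2 b2 c2 d2; ring.
- by move=> *; rewrite a3 b3 c3 d3; ring.
- by move=> *; rewrite a4 b4 c4 d4; ring.
- move=> x y z u; rewrite (as1 x y z u) (bs1 x y z u) (cs1 x y z u) (ds1 x y z u); ring.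
- move=> x y z u; rewrite (as2 x y z u) (bs2 x y z u) (cs2 x y z u) (ds2 x y z u); ring.
- move=> x y z u; have := ab x y z u; have := bb x y z u; have := cb x y z u; have := db x y z u.
  move=> e1 e2 e3 e4.
  have -> : A x y z u - (ka * B x y z u + kb * C x y z u - kc * D x y z u) +
    (A y z x u - (ka * B y z x u + kb * C y z x u - kc * D y z x u)) +
    (A z x y u - (ka * B z x y u + kb * C z x y u - kc * D z x y u)) =
    (A x y z u + A y z x u + A z x y u) - ka * (B x y z u + B y z x u + B z x y u)
    - kb * (C x y z u + C y z x u + C z x y u) + kc * (D x y z u + D y z x u + D z x y u)
    by ring.
  by rewrite e1 e2 e3 e4; ring.
Qed.

Lemma RK_comb (R : realFieldType) (m : nat) (J : 'M[R]_m) (A B C D : tensor4 R m) (ka kb kc : R) :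
  RK A J -> RK B J -> RK C J -> RK D J ->
  RK (fun x y z u => A x y z u - (ka * B x y z u + kb * C x y z u - kc * D x y z u)) J.
Proof. by move=> ha hb hc hd x y z u; rewrite ha hb hc hd. Qed.

Section R1R2.
Variables (R : realFieldType) (m : nat) (G J : 'M[R]_m) (E : 'I_m -> 'rV[R]_m).
Notation V := 'rV[R]_m.
Hypothesis GT : G^T = G.
Hypothesis JJ : J *m J = - 1%:M.
Hypothesis Jiso : forall x y, gform G (Jact J x) (Jact J y) = gform G x y.
Hypothesis ONB : orthonormal_basis G E.
Local Notation g := (gform G).
Local Notation j := (Jact J).
Let gc x y : g x y = g y x. Proof. exact: gC. Qed.
Let gj x y : g (j x) y = - g x (j y). Proof. exact: gjl. Qed.
Let jjx x : j (j x) = - x. Proof. exact: jj. Qed.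
Let pars f v : lin f -> \sum_i g v (E i) * f (E i) = f v.
Proof. exact: parseval. Qed.
Let pars' f v : lin f -> \sum_i g (E i) v * f (E i) = f v.
Proof. exact: parseval'. Qed.
Let gjx x : g (j x) x = 0. Proof. have := gj x x; rewrite gc; lra. Qed.

Lemma R1_ct : curvature_tensor (R1 G).
Proof.
split; first split => a p p' q r s; rewrite /R1 ?(gDl G) ?(gDr GT); try ring.
- by move=> x y z u; rewrite /R1 (gc y z) (gc x z); ring.
- by move=> x y z u; rewrite /R1; ring.
- by move=> x y z u; rewrite /R1 (gc z x) (gc y x) (gc z y); ring.
Qed.

Lemma R1_RK : RK (R1 G) J.
Proof. by move=> x y z u; rewrite /R1 !Jiso. Qed.

Lemma R1_tr y z : \sum_i R1 G (E i) y z (E i) = (m%:R - 1) * g y z.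
Proof.
rewrite /R1 sumrB -mulr_sumr sum_gEE // (pars' z (lin_gr GT y)); ring.
Qed.

Lemma R1_trp y z : \sum_i R1 G (E i) y (j z) (j (E i)) = g y z.
Proof.
rewrite /R1 sumrB (eq_bigr (fun=> 0)) => [|i _]; last by rewrite (gc (E i)) gjx mulr0.
rewrite big1_eq sub0r (pars' (j z) (lin_comp_j J (lin_gr GT y))) jjx (gNr GT) opprK //.
Qed.

Lemma R2psi x y z u : R2 G J x y z u = psi G J g x y z u / 2.
Proof. by rewrite /R2 /psi; field. Qed.

Let gSDl a x y z : g (a *: x + y) z = a * g x z + g y z. Proof. exact: gDl. Qed.
Let gSDr a x y z : g z (a *: x + y) = a * g z x + g z y. Proof. exact: gDr. Qed.

Lemma R2_ct : curvature_tensor (R2 G J).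
Proof.
have h := psi_ct GT JJ Jiso gSDl gSDr gc Jiso.
case: h => [[a1 a2 a3 a4] s1 s2 b]; split; first split; move=> *; rewrite !R2psi ?a1 ?a2 ?a3 ?a4.
all: try ring.
- by rewrite s1; ring.
- by rewrite s2; ring.
- by rewrite -!mulrDl b mul0r.
Qed.
Lemma R2_RK : RK (R2 G J) J.
Proof. move=> x y z u; rewrite !R2psi; congr (_ / _); exact: (psi_RK Jiso Jiso). Qed.

Lemma R2_tr y z : \sum_i R2 G J (E i) y z (E i) = 3 * g y z.
Proof.
rewrite (eq_bigr (fun i => psi G J g (E i) y z (E i) / 2)) => [|i _]; last exact: R2psi.
by rewrite -mulr_suml (psi_tr GT JJ Jiso ONB gSDl gSDr gc Jiso); field.
Qed.

Lemma R2_trp y z : \sum_i R2 G J (E i) y (j z) (j (E i)) = (m%:R + 1) * g y z.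
Proof.
rewrite (eq_bigr (fun i => psi G J g (E i) y (j z) (j (E i)) / 2)) => [|i _]; last exact: R2psi.
rewrite -mulr_suml (psi_trp GT JJ Jiso ONB gSDl gSDr gc Jiso) (sum_gEE ONB); by field.
Qed.

Lemma R2_anti x y : g (j x) y = 0 -> g (j y) x = 0 -> R2 G J x y y x = 0.
Proof. by move=> h1 h2; rewrite R2psi (psi_anti GT JJ Jiso) // mul0r. Qed.
End R1R2.

Section Final.
Variables (R : realFieldType) (m n : nat) (G J : 'M[R]_m) (E : 'I_m -> 'rV[R]_m).
Variables (Rc : tensor4 R m) (nu : R).
Notation V := 'rV[R]_m.
Hypothesis GT : G^T = G.
Hypothesis Gpos : forall x : V, x != 0 -> 0 < gform G x x.
Hypothesis JJ : J *m J = - 1%:M.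
Hypothesis Jiso : forall x y, gform G (Jact J x) (Jact J y) = gform G x y.
Hypothesis ONB : orthonormal_basis G E.
Hypothesis hRc : curvature_tensor Rc.
Hypothesis RKc : RK Rc J.
Hypothesis antic : const_antihol Rc G J nu.
Hypothesis hm : (3 <= m)%N.
Hypothesis hmR : (m%:R : R) = 2 * n%:R.
Hypothesis hn : (2 <= n)%N.
Local Notation g := (gform G).
Local Notation j := (Jact J).
Let gc x y : g x y = g y x. Proof. exact: gC. Qed.
Let gj x y : g (j x) y = - g x (j y). Proof. exact: gjl. Qed.
Let jjx x : j (j x) = - x. Proof. exact: jj. Qed.
Let pars f v : lin f -> \sum_i g v (E i) * f (E i) = f v.
Proof. exact: parseval. Qed.
Let pars' f v : lin f -> \sum_i g (E i) v * f (E i) = f v.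
Proof. exact: parseval'. Qed.
Let mRc : multilinear4 Rc. Proof. by case: hRc. Qed.

Lemma trJ (B : V -> V -> R) : (forall b, lin (fun a => B a b)) -> (forall a, lin (fun b => B a b)) ->
  \sum_i B (j (E i)) (j (E i)) = \sum_i B (E i) (E i).
Proof.
move=> hl hr.
rewrite (eq_bigr (fun i => \sum_k g (j (E i)) (E k) * B (E k) (j (E i)))) => [|i _]; last first.
  by rewrite (pars (j (E i)) (hl (j (E i)))).
rewrite exchange_big; apply: eq_bigr => k _ /=.
rewrite (eq_bigr (fun i => - (g (E i) (j (E k)) * B (E k) (j (E i))))) => [|i _]; last first.
  by rewrite gj mulNr.
by rewrite sumrN (pars' (j (E k)) (lin_comp_j J (hr (E k)))) jjx (linN (hr _)) opprK.
Qed.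

Let S := Ricci Rc E.
Let SDl a x y z : S (a *: x + y) z = a * S x z + S y z.
Proof.
rewrite /S /Ricci mulr_sumr -big_split; apply: eq_bigr => i _.
by case: mRc => _ h _ _; rewrite h.
Qed.
Let SDr a x y z : S z (a *: x + y) = a * S z x + S z y.
Proof.
rewrite /S /Ricci mulr_sumr -big_split; apply: eq_bigr => i _.
by case: mRc => _ _ h _; rewrite h.
Qed.
Let Ssym x y : S x y = S y x.
Proof.
rewrite /S /Ricci; apply: eq_bigr => i _.
rewrite (pairsym hRc (E i) x y (E i)).
by case: hRc => _ a1 a2 _; rewrite a1 a2 opprK.
Qed.
Let SJ x y : S (j x) (j y) = S x y.
Proof.
rewrite /S /Ricci (eq_bigr (fun i => Rc (j (E i)) x y (j (E i)))) => [|i _]; last first.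
  by rewrite RKc !jjx (mlN2 mRc) (mlN3 mRc) opprK.
apply: (trJ (B := fun a b => Rc a x y b)) => [b|a]; [exact: (lin1 mRc) | exact: (lin4 mRc)].
Qed.
Let c := (2 * n%:R - 1) / 3 : R.
Let U : tensor4 R m := fun x y z u => Rc x y z u -
  (6^-1 * psi G J S x y z u + nu * R1 G x y z u - (c * nu) * R2 G J x y z u).

Let hpsi := psi_ct GT JJ Jiso SDl SDr Ssym SJ.
Let hU : curvature_tensor U.
Proof. exact: ct_comb hRc hpsi (R1_ct GT) (R2_ct GT JJ Jiso). Qed.
Let RKU : RK U J.
Proof. apply: RK_comb => //; [exact: psi_RK | exact: R1_RK | exact: R2_RK]. Qed.
Let n0 : (n%:R : R) != 0.
Proof. by rewrite pnatr_eq0 -lt0n (leq_trans _ hn). Qed.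

Let RicU y z : \sum_i U (E i) y z (E i) = 0.
Proof.
rewrite /U /= big_split /= sumrN !big_split /= sumrN -!mulr_sumr.
rewrite (psi_tr GT JJ Jiso ONB SDl SDr Ssym SJ) (R1_tr GT ONB) (R2_tr GT JJ Jiso ONB).
rewrite -/(Ricci Rc E y z) -/S hmR /c; by field.
Qed.

Let antiU x y : antihol_onb G J x y -> U x y y x = 0.
Proof.
move=> h; have hR := antic h; case: h => hx hy hxy [_ h1 h2 _].
rewrite /U hR (psi_anti GT JJ Jiso) // (R2_anti GT JJ Jiso) // /R1 hx hy hxy gc hxy; ring.
Qed.

Lemma concl1 x y z u : Rc x y z u = 6^-1 * psi G J S x y z u + nu * R1 G x y z u
                      - ((2 * n%:R - 1) / 3) * nu * R2 G J x y z u.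
Proof.
have := main_vanish GT Gpos JJ Jiso ONB hm hU RKU RicU antiU x y z u.
by rewrite /U -/c; move/eqP; rewrite subr_eq0 => /eqP.
Qed.
Let tau := scalar_curv S E.
Lemma Sp_formula y z : Ricci (Rprime Rc J) E y z =
  6^-1 * (g y z * tau + (m%:R + 2) * S y z) + nu * g y z - c * nu * ((m%:R + 1) * g y z).
Proof.
rewrite /Ricci /Rprime.
rewrite (eq_bigr (fun i => 6^-1 * psi G J S (E i) y (j z) (j (E i)) + nu * R1 G (E i) y (j z) (j (E i))
   - c * nu * R2 G J (E i) y (j z) (j (E i)))) => [|i _]; last by rewrite concl1.
rewrite !big_split /= sumrN -!mulr_sumr.
rewrite (psi_trp GT JJ Jiso ONB SDl SDr Ssym SJ) (R1_trp GT JJ Jiso ONB) (R2_trp GT JJ Jiso ONB).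
by rewrite /tau /scalar_curv.
Qed.

Lemma tau'_formula : scalar_curv (Ricci (Rprime Rc J) E) E =
  6^-1 * (m%:R * tau + (m%:R + 2) * tau) + nu * m%:R - c * nu * ((m%:R + 1) * m%:R).
Proof.
rewrite /scalar_curv (eq_bigr (fun i => 6^-1 * (g (E i) (E i) * tau + (m%:R + 2) * S (E i) (E i))
   + nu * g (E i) (E i) - c * nu * ((m%:R + 1) * g (E i) (E i)))) => [|i _]; last exact: Sp_formula.
rewrite !big_split /= sumrN -!mulr_sumr big_split /= -!mulr_sumr -mulr_suml sum_gEE //.
Qed.
Lemma final_all :
  let S := Ricci Rc E in
  let S' := Ricci (Rprime Rc J) E in
  let tau := scalar_curv S E in
  let tau' := scalar_curv S' E in
  [/\ (forall x y z u,
         Rc x y z u = 6^-1 * psi G J S x y z u + nu * R1 G x y z u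
                      - ((2 * n%:R - 1) / 3) * nu * R2 G J x y z u),
      (forall y z,
         3 * S' y z - (n%:R + 1) * S y z
         = (2 * n%:R)^-1 * (3 * tau' - (n%:R + 1) * tau) * gform G y z) &
      nu = ((2 * n%:R + 1) * tau - 3 * tau') / (8 * n%:R * (n%:R ^+ 2 - 1))].
Proof.
have h2 : (2 : R) <= n%:R by rewrite ler_nat.
have n1 : (n%:R : R) ^+ 2 - 1 != 0 by apply: lt0r_neq0; nra.
split.
- exact: concl1.
- move=> y z; rewrite Sp_formula tau'_formula -/S -/tau hmR /c; field.
  by rewrite n0.
- rewrite tau'_formula -/S -/tau hmR /c; field.
  by rewrite n0 n1.
Qed.
End Final.

Unset Implicit Arguments.

Theorem proposition1 (R : realFieldType) (n : nat) (hn : (2 <= n)%N)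
    (G J : 'M[R]_(n.*2)) (E : 'I_(n.*2) -> 'rV[R]_(n.*2))
    (Rc : tensor4 R (n.*2)) (nu : R) :
  G^T = G ->
  (forall x : 'rV[R]_(n.*2), x != 0 -> 0 < gform G x x) ->
  J *m J = - 1%:M ->
  (forall x y, gform G (Jact J x) (Jact J y) = gform G x y) ->
  orthonormal_basis G E ->
  curvature_tensor Rc ->
  RK Rc J ->
  const_antihol Rc G J nu ->
  let S := Ricci Rc E in
  let S' := Ricci (Rprime Rc J) E in
  let tau := scalar_curv S E in
  let tau' := scalar_curv S' E in
  [/\ (forall x y z u,
         Rc x y z u = 6^-1 * psi G J S x y z u + nu * R1 G x y z u
                      - ((2 * n%:R - 1) / 3) * nu * R2 G J x y z u),
      (forall y z,
         3 * S' y z - (n%:R + 1) * S y z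
         = (2 * n%:R)^-1 * (3 * tau' - (n%:R + 1) * tau) * gform G y z) &
      nu = ((2 * n%:R + 1) * tau - 3 * tau') / (8 * n%:R * (n%:R ^+ 2 - 1))].
Proof.
move=> GT Gpos JJ Jiso ONB hRc RKc antic.
have hm : (3 <= n.*2)%N.
  by apply: (leq_trans _ (_ : 2.*2 <= n.*2)%N); rewrite ?leq_double.
have hmR : ((n.*2)%:R : R) = 2 * n%:R by rewrite -mul2n natrM.
exact: (final_all GT Gpos JJ Jiso ONB hRc RKc antic hm hmR hn).
Qed.
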